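(* Let $X$ be a set and let $\mathcal{L}$ be a nest on $X$. Then $\mathcal{L}$ is interlocking if and only if, for each $L \in \mathcal{L}$ such that $L$ is closed in the Alexandroff topology determined by $\triangleleft_{\mathcal{L}}$, the set $X-L$ is closed in the Alexandroff topology determined by $\triangleleft_{\mathcal{L}^c}$.
   Context: A nest on $X$ is a family $\mathcal{L}$ of subsets of $X$ such that for all $M,N\in\mathcal{L}$, either $M\subseteq N$ or $N\subseteq M$. For a family $\mathcal{S}$ of subsets of $X$, define the relation $x \triangleleft_{\mathcal{S}} y$ iff there exists $S\in\mathcal{S}$ with $x\in S$ and $y\notin S$. Let $\mathcal{L}^c=\{X-L : L\in\mathcal{L}\}$. A family $\mathcal{S}$ of subsets of $X$ is interlocking if for every $T\in\mathcal{S}$ with $T=\bigcap\{S : T\subseteq S,\ S\in\mathcal{S}-\{T\}\}$ one has $T=\bigcup\{S : S\subseteq T,\ S\in\mathcal{S}-\{T\}\}$. For a relation $\triangleleft$ on $X$ and $A\subseteq X$, let ${\uparrow}A=\{x\in X : \exists y\in A,\ y\triangleleft x\}$. The Alexandroff topology determined by $\triangleleft$ is the family $\{U\subseteq X : U={\uparrow}U\}$ (these are the open sets); a set is closed if its complement is open. *)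

(* Defs.v *)
From mathcomp Require Import all_boot.
From mathcomp Require Import boolp classical_sets.
Set Implicit Arguments. Unset Strict Implicit. Unset Printing Implicit Defensive.
Local Open Scope classical_set_scope.

Definition nest (T : Type) (L : set (set T)) : Prop :=
  forall M N, L M -> L N -> M `<=` N \/ N `<=` M.

Definition tri (T : Type) (S : set (set T)) (x y : T) : Prop :=
  exists2 A, S A & (A x /\ ~ A y).

Definition compl_fam (T : Type) (L : set (set T)) : set (set T) :=
  [set B | exists2 A, L A & B = ~` A].

(* Interlocking family. Intersection over an empty subfamily is X (setT). *)
Definition interlocking (T : Type) (S : set (set T)) : Prop :=
  forall T0, S T0 ->
    T0 = \bigcap_(A in [set A | S A /\ T0 `<=` A /\ A <> T0]) A ->
    T0 = \bigcup_(A in [set A | S A /\ A `<=` T0 /\ A <> T0]) A.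

Definition up (T : Type) (r : T -> T -> Prop) (A : set T) : set T :=
  [set x | exists2 y, A y & r y x].

Definition alex_open (T : Type) (r : T -> T -> Prop) (U : set T) : Prop :=
  U = up r U.

Definition alex_closed (T : Type) (r : T -> T -> Prop) (C : set T) : Prop :=
  alex_open r (~` C).

(* Main.v *)
Require Import Defs.
From mathcomp Require Import all_boot.
From mathcomp Require Import boolp classical_sets.
From Stdlib Require Import Classical.
Local Open Scope classical_set_scope.

Lemma closed_iff (T : Type) (L : set (set T)) (N : nest L) A (LA : L A) :
  alex_closed (tri L) A <->
  A = \bigcap_(B in [set B | L B /\ A `<=` B /\ B <> A]) B.
Proof.
rewrite /alex_closed /alex_open; split => H.
- apply/seteqP; split.
  + by move=> x Ax B [LB [AB _]]; exact: AB.
  + move=> x Hx; apply: NNPP => nAx.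
    have : (~` A) x by [].
    rewrite H => -[y nAy [B LB [By nBx]]].
    case: (N A B LA LB) => AB.
    * apply: nBx; apply: Hx; split => //; split => // BA.
      by apply: nAy; rewrite -BA.
    * by apply: nAy; exact: AB.
- apply/seteqP; split.
  + move=> x nAx.
    have : ~ (\bigcap_(B in [set B | L B /\ A `<=` B /\ B <> A]) B) x by rewrite -H.
    rewrite /bigcap /= => /not_all_ex_not [B HB]. 
    destruct (imply_to_and _ _ HB) as [[LB [AB BA]] nBx].
    have [y [By nAy]] : exists y, B y /\ ~ A y.
      apply: NNPP => nex; apply: BA; apply/seteqP; split => // z Bz.
      by apply: NNPP => nAz; apply: nex; exists z.
    by exists y => //; exists B.
  + move=> x [y nAy [B LB [By nBx]]] Ax.
    case: (N A B LA LB) => AB.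
    * by apply: nBx; exact: AB.
    * by apply: nAy; exact: AB.
Qed.

Lemma cclosed_iff (T : Type) (L : set (set T)) (N : nest L) A (LA : L A) :
  alex_closed (tri (compl_fam L)) (~` A) <->
  A = \bigcup_(B in [set B | L B /\ B `<=` A /\ B <> A]) B.
Proof.
rewrite /alex_closed /alex_open setCK; split => H.
- apply/seteqP; split.
  + move=> x Ax.
    have [y Ay [C [B LB CB] [nBy Bx]]] : up (tri (compl_fam L)) A x by rewrite -H.
    rewrite CB /= in nBy Bx.
    exists B; last exact: NNPP Bx.
    case: (N A B LA LB) => AB.
    * by exfalso; apply: nBy; apply: AB.
    * by split => //; split => // BA; apply: nBy; rewrite BA.
  + by move=> x [B [LB [BA _]] Bx]; exact: BA.
- apply/seteqP; split.
  + move=> x Ax.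
    have : (\bigcup_(B in [set B | L B /\ B `<=` A /\ B <> A]) B) x by rewrite -H.
    move=> [B [LB [BA nBA]] Bx].
    have [y [Ay nBy]] : exists y, A y /\ ~ B y.
      apply: NNPP => nex; apply: nBA; apply/seteqP; split => // z Az.
      by apply: NNPP => nBz; apply: nex; exists z.
    exists y => //; exists (~` B); first by exists B.
    by split => //= /(_ Bx).
  + move=> x [y Ay [C [B LB ->] [nBy Bx]]].
    case: (N A B LA LB) => AB.
    * by exfalso; apply: nBy; apply: AB.
    * exact: AB _ (NNPP _ Bx).
Qed.

Theorem theorem3p4 (T : Type) (L : set (set T)) :
  nest L ->
  (interlocking L <->
   (forall A, L A -> alex_closed (tri L) A ->
      alex_closed (tri (compl_fam L)) (~` A))).
Proof.
move=> N; split.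
- move=> I A LA /(@closed_iff _ _ N _ LA) HA; apply/(@cclosed_iff _ _ N _ LA).
  by apply: I.
- move=> H A LA HA; apply/(@cclosed_iff _ _ N _ LA); apply: H => //.
  by apply/(@closed_iff _ _ N _ LA).
Qed.
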